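(* Let $s\in\mathscr S_+^\circ$, let $d=\min\{i\in\omega: s_i=0\}$, and let $s^+\in\mathscr S_+$ be defined by $\operatorname{supp}(s^+)=\operatorname{supp}(s)\cup\{d\}$. Then $s^+\in\mathscr S_+^\circ$, $s\prec s^+$, and $\mathfrak d(s^+)=\mathfrak d(s)+1$.
   Context: $\omega=\{0,1,\dots\}$, $[m]=\{1,\dots,m\}$. A finite sign sequence is $s\in\{-,0,+\}^\omega$ with finitely many nonzero entries; $\mathscr S$ their set; $\operatorname{supp}(s)=\{i:s_i\ne0\}$; $\mathscr S_+=\mathscr S\cap\{0,+\}^\omega$. $\mathrm{SC}(t)$ = number of pairs $i<j$ with $\{t_i,t_j\}=\{-,+\}$ and $t_k=0$ for $i<k<j$. $\mathfrak d(s)=\max\{\mathrm{SC}(t):t\in\mathscr S,\ t_i\in\{-,0,s_i\}\ \forall i\}$. $\mathscr S_+^\circ=\{s\in\mathscr S_+:\mathfrak d(s)=\#\operatorname{supp}(s)\}$. Interval decomposition of $s\in\mathscr S_+$: $\operatorname{supp}(s)=X_0\amalg\cdots\amalg X_k$ into intervals with $0\in X_0$ if $0\in\operatorname{supp}(s)$ else $X_0=\emptyset$, $X_i\neq\emptyset$ for $i\in[k]$, $\min X_i-\max X_{i-1}\ge2$ ($\max\emptyset=-\infty$). $\lfloor X_i\rfloor=\{\min X_i-1\}\amalg X_i$ if $\#X_i$ odd, else $X_i$; $\lceil X_i\rceil=X_i\amalg\{\max X_i+1\}$ if $\#X_i$ odd, else $X_i$; $\operatorname{supp}(\lfloor s\rfloor)=X_0\amalg\lfloor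 X_1\rfloor\amalg\cdots\amalg\lfloor X_k\rfloor$, $\operatorname{supp}(\lceil s\rceil)=X_0\amalg\lceil X_1\rceil\amalg\cdots\amalg\lceil X_k\rceil$. On $\mathscr S_+^\circ$: $s\preceq_0 s'$ iff, with supports $\{d_1>\cdots>d_m\}$, $\{d'_1>\cdots>d'_{m'}\}$, $m\le m'$ and $d_i\le d'_i$ for $i\in[m]$. On $\mathscr S_+$: $s\preceq s'$ iff $s=s'$, or $s\ne s'$ and $\lceil s\rceil\preceq_0\lfloor s'\rfloor$; $s\prec s'$ means $s\preceq s'$, $s\ne s'$. *)

(* Defs.v *)
From HB Require Import structures.
From mathcomp Require Import all_boot.
Set Implicit Arguments. Unset Strict Implicit. Unset Printing Implicit Defensive.

Inductive sign := Neg | Zer | Pos.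

Definition sign_eqb (a b : sign) : bool :=
  match a, b with
  | Neg, Neg | Zer, Zer | Pos, Pos => true
  | _, _ => false
  end.

Lemma sign_eqP : Equality.axiom sign_eqb.
Proof. by case; case; constructor. Qed.

HB.instance Definition _ := hasDecEq.Build sign sign_eqP.

(* A finite sign sequence s in S is represented by a list [s] : seq sign;
   its i-th entry is [s_i] := nth Zer s i (entries beyond the list are 0).
   Two lists represent the same element of S iff they agree entrywise. *)
Definition entry (s : seq sign) (i : nat) : sign := nth Zer s i.

Definition seq_eq (s s' : seq sign) : Prop := forall i, entry s i = entry s' i.

Definition inSupp (s : seq sign) (i : nat) : bool := entry s i != Zer.

Definition suppl (s : seq sign) : seq nat := [seq i <- iota 0 (size s) | inSupp s i].

Definition Splus (s : seq sign) : Prop := forall i, entry s i != Neg.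

Definition signchange (t : seq sign) (i j : nat) : bool :=
  [&& ((entry t i == Neg) && (entry t j == Pos)) ||
      ((entry t i == Pos) && (entry t j == Neg)),
      i < j &
      all (fun k => entry t k == Zer) (iota i.+1 (j - i.+1))].

Definition SC (t : seq sign) : nat :=
  \sum_(j < size t) \sum_(i < j) signchange t i j.

Definition admissible (s t : seq sign) : Prop :=
  forall i, entry t i = Neg \/ entry t i = Zer \/ entry t i = entry s i.

Definition IsDd (s : seq sign) (n : nat) : Prop :=
  (exists t, admissible s t /\ SC t = n) /\
  (forall t, admissible s t -> SC t <= n).

Definition SplusCirc (s : seq sign) : Prop :=
  Splus s /\ IsDd s (size (suppl s)).

(* [a,b] is one of the intervals of the interval decomposition of supp(s):
   a maximal interval of consecutive support elements. *)
Definition is_run (s : seq sign) (a b : nat) : bool :=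
  [&& a <= b, all (inSupp s) (iota a (b.+1 - a)),
      (a == 0) || ~~ inSupp s a.-1 & ~~ inSupp s b.+1].

(* i = min X_k - 1 for some X_k (k >= 1, i.e. min X_k >= 1) of odd size *)
Definition floor_add (s : seq sign) (i : nat) : bool :=
  has (fun b => is_run s i.+1 b && odd (b - i)) (iota i.+1 (size s)).

(* i = max X_k + 1 for some X_k with k >= 1 (min X_k >= 1) of odd size *)
Definition ceil_add (s : seq sign) (i : nat) : bool :=
  (0 < i) && has (fun a => (0 < a) && is_run s a i.-1 && odd (i - a)) (iota 1 i).

Definition sfloor (s : seq sign) : seq sign :=
  mkseq (fun i => if inSupp s i || floor_add s i then Pos else Zer) (size s).

Definition sceil (s : seq sign) : seq sign :=
  mkseq (fun i => if inSupp s i || ceil_add s i then Pos else Zer) (size s).+1.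

Definition preceq0 (s s' : seq sign) : bool :=
  let d := rev (suppl s) in let d' := rev (suppl s') in
  (size d <= size d') && all (fun i => nth 0 d i <= nth 0 d' i) (iota 0 (size d)).

Definition preceq (s s' : seq sign) : Prop :=
  seq_eq s s' \/ (~ seq_eq s s' /\ preceq0 (sceil s) (sfloor s')).

Definition prec (s s' : seq sign) : Prop := preceq s s' /\ ~ seq_eq s s'.

(* Main.v *)
Require Import Defs.
From mathcomp Require Import all_boot zify.

Definition opp (a b : sign) : bool :=
  ((a == Neg) && (b == Pos)) || ((a == Pos) && (b == Neg)).

Fixpoint chgl (l : seq sign) : nat :=
  match l with
  | x :: ((y :: _) as l') => opp x y + chgl l'
  | _ => 0
  end.

Definition nz (t : seq sign) := [seq x <- t | x != Zer].

Definition hterm (x : sign) (t : seq sign) : nat :=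
  if nz t is y :: _ then opp x y else 0.

Lemma iota_succ m n : iota m.+1 n = map succn (iota m n).
Proof. by rewrite -addn1 addnC iotaDl. Qed.

Lemma sc_succ x t i j : signchange (x :: t) i.+1 j.+1 = signchange t i j.
Proof.
rewrite /signchange ltnS subSS iota_succ all_map.
by congr [&& _, _ & _].
Qed.

Lemma sc_zero x t j :
  signchange (x :: t) 0 j.+1 = opp x (entry t j) && all (fun k => entry t k == Zer) (iota 0 j).
Proof.
rewrite /signchange /= subn1 /= iota_succ all_map /opp.
by case: (_ || _).
Qed.

Lemma oppZ x : opp x Zer = false. Proof. by case: x. Qed.

Lemma hsum x t :
  \sum_(j < size t) (opp x (entry t j) && all (fun k => entry t k == Zer) (iota 0 j)) = hterm x t.
Proof.
elim: t => [|y t IH]; first by rewrite big_ord0.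
rewrite /= big_ord_recl /=.
under eq_bigr => j _ do rewrite /bump /= iota_succ all_map /= add0n.
case: (eqVneq y Zer) => [->|yn] /=.
  rewrite oppZ add0n.
  rewrite -[hterm x (Zer :: t)]/(hterm x t) -IH.
  by apply: eq_bigr => j _.
rewrite big1 ?addn0 /hterm /= ?yn ?andbT //.
by move=> j _; rewrite andbF.
Qed.

Lemma SC_cons x t : SC (x :: t) = SC t + hterm x t.
Proof.
rewrite /SC [size _]/= big_ord_recl big_ord0 add0n.
under eq_bigr => j _ do rewrite lift0 big_ord_recl.
rewrite big_split /= addnC.
congr (_ + _).
  apply: eq_bigr => j _; apply: eq_bigr => i _.
  by rewrite /bump leq0n add1n sc_succ.
rewrite -hsum; apply: eq_bigr => j _.
by rewrite sc_zero.
Qed.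

Lemma SC_nil : SC [::] = 0. Proof. by rewrite /SC big_ord0. Qed.

Lemma chgl_cons x l : chgl (x :: l) = (if l is y :: _ then opp x y else 0) + chgl l.
Proof. by case: l. Qed.

Lemma SC_chgl t : SC t = chgl (nz t).
Proof.
elim: t => [|x t IH]; first by rewrite SC_nil.
rewrite SC_cons IH /hterm.
case: (eqVneq x Zer) => [->|xn] /=.
  by case: (nz t) => [|y l] //=; rewrite addn0.
by rewrite xn chgl_cons addnC.
Qed.

Lemma chgl_behead t : chgl (nz t) <= chgl (nz (behead t)) + 1.
Proof.
case: t => [|x t] //=.
case: (x != Zer) => //=.
  by case: (nz t) => [|y l] //=; rewrite addnC leq_add2l leq_b1.
by rewrite addn1.
Qed.

Lemma mkseq_nthS (u : seq sign) n :
  mkseq (nth Zer u) n.+1 = nth Zer u 0 :: mkseq (nth Zer (behead u)) n.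
Proof.
rewrite /mkseq /= iota_succ -map_comp; f_equal.
by apply: eq_map => k /=; case: u => [|y u] //=; rewrite !nth_nil.
Qed.

Lemma nz_mkseq u n : nz (mkseq (nth Zer u) n) = nz (take n u).
Proof.
elim: n u => [|n IH] u; first by rewrite take0.
rewrite mkseq_nthS.
case: u => [|y u] /=.
  by rewrite IH.
by rewrite IH.
Qed.

Definition shiftd (t : seq sign) d := mkseq (fun k => entry t k.+1) d ++ Zer :: drop d.+1 t.

Lemma nz_shiftd t d : nz (shiftd t d) = nz (behead t).
Proof.
rewrite /shiftd /nz filter_cat /=.
have -> : mkseq (fun k => entry t k.+1) d = mkseq (nth Zer (behead t)) d.
  by apply: eq_mkseq => k; rewrite /entry nth_behead.
rewrite -/(nz _) nz_mkseq -filter_cat.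
by rewrite -{2}(cat_take_drop d (behead t)) -drop1 drop_drop addn1.
Qed.

Lemma entry_shiftd t d k :
  entry (shiftd t d) k = if k < d then entry t k.+1 else if k == d then Zer else entry t k.
Proof.
rewrite /shiftd /entry nth_cat size_mkseq.
case: ltnP => kd; first by rewrite nth_mkseq.
case: eqVneq => [->|kn]; first by rewrite subnn.
have -> : k - d = (k - d.+1).+1 by rewrite subnSK // ltn_neqAle eq_sym kn kd.
by rewrite /= nth_drop subnKC // ltn_neqAle eq_sym kn kd.
Qed.

Lemma entry_splus u k : Splus u -> entry u k = if inSupp u k then Pos else Zer.
Proof. move=> H; rewrite /inSupp; move: (H k); by case: (entry u k). Qed.

Lemma adm_shiftd s d sp t : Splus s -> Splus sp ->
  (forall i, i < d -> entry s i != Zer) ->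
  (forall i, inSupp sp i = inSupp s i || (i == d)) ->
  admissible sp t -> admissible s (shiftd t d).
Proof.
move=> Hs Hsp Hd Hsupp Ht i; rewrite entry_shiftd.
case: ltnP => id.
  have e : entry s i = Pos by rewrite (entry_splus _ _ Hs) /inSupp Hd.
  by rewrite e; case: (entry t i.+1); auto.
case: eqVneq => [_|ne]; first by auto.
rewrite (entry_splus _ _ Hs); move: (Ht i); rewrite (entry_splus _ _ Hsp) Hsupp (negbTE ne) orbF.
done.
Qed.

Fixpoint ef (u : seq sign) (n k : nat) : nat :=
  match n with 0 => 0 | n'.+1 => if inSupp u k then (ef u n' k.+1).+1 else 0 end.
Definition ee u k := ef u (size u) k.
Definition cf u k : sign := if inSupp u k && odd (ee u k) then Pos else Neg.
Definition ct u := mkseq (cf u) (size u).+1.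

Lemma inSupp_big u k : size u <= k -> inSupp u k = false.
Proof. by move=> h; rewrite /inSupp /entry nth_default. Qed.

Lemma ef_stable u n k : size u <= n + k -> ef u n k = ef u n.+1 k.
Proof.
elim: n k => [|n IH] k h /=; first by rewrite inSupp_big.
by rewrite IH // addnS -addSn.
Qed.

Lemma ee_S u k : inSupp u k -> ee u k = (ee u k.+1).+1.
Proof.
move=> h; rewrite /ee.
have : k < size u by rewrite ltnNge; apply/negP => /inSupp_big; rewrite h.
case E: (size u) => [|m] // _ /=.
by rewrite h ef_stable // E addnS ltnS leq_addr.
Qed.

Lemma ee_N u k : ~~ inSupp u k -> ee u k = 0.
Proof. by move=> h; rewrite /ee; case: (size u) => //= n; rewrite (negbTE h). Qed.

Arguments ee_S {u k}.
Arguments ee_N {u k}.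

Lemma cf_change u k : inSupp u k -> opp (cf u k) (cf u k.+1).
Proof.
move=> h; rewrite /cf h (ee_S h) /=.
case h1 : (inSupp u k.+1) => /=.
  by case: (odd (ee u k.+1)).
by rewrite ee_N ?h1.
Qed.

Lemma run_ee u a b : is_run u a b -> ee u a = b.+1 - a.
Proof.
case/and4P => ab /allP hall _ hb.
have hin : forall k, a <= k <= b -> inSupp u k.
  by move=> k hk; apply: hall; rewrite mem_iota; lia.
suff H : forall j, j <= b - a -> ee u (b - j) = j.+1.
  have -> : a = b - (b - a) by lia.
  rewrite H; lia.
elim=> [|j IH] hj.
  rewrite subn0 ee_S ?ee_N //; apply: hin; lia.
rewrite ee_S; last by apply: hin; lia.
have := IH ltac:(lia).
have -> : b - j = (b - j.+1).+1 by lia.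
by move=> ->.
Qed.

Lemma entry_ct u k : entry (ct u) k = if k <= size u then cf u k else Zer.
Proof.
rewrite /entry /ct; case: leqP => h; first by rewrite nth_mkseq.
by rewrite nth_default // size_mkseq.
Qed.

Lemma ct_adm u : Splus u -> admissible u (ct u).
Proof.
move=> Hu k; rewrite entry_ct; case: leqP => _; last by auto.
rewrite /cf; case h: (inSupp u k && _); last by auto.
move/andP: h => [h _]; rewrite (entry_splus _ _ Hu) h; auto.
Qed.

Lemma nz_ct u : nz (ct u) = ct u.
Proof. by apply/all_filterP; rewrite /ct /mkseq all_map; apply/allP => k _ /=; rewrite /cf; case: ifP. Qed.

Lemma chgl_map (f : nat -> sign) m n :
  chgl (map f (iota m n.+1)) = count (fun k => opp (f k) (f k.+1)) (iota m n).
Proof.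
elim: n m => [|n IH] m //=.
by rewrite -IH.
Qed.

Lemma SC_ct u : SC (ct u) = count (fun k => opp (cf u k) (cf u k.+1)) (iota 0 (size u)).
Proof. by rewrite SC_chgl nz_ct /ct /mkseq chgl_map. Qed.

Lemma supp_count u N : size u <= N -> size (suppl u) = count (inSupp u) (iota 0 N).
Proof.
move=> h; rewrite /suppl size_filter -(subnKC h) iotaD count_cat add0n.
rewrite [count _ (iota (size u) _)](_ : _ = 0) ?addn0 //.
rewrite (eq_in_count (a2 := pred0)) ?count_pred0 //.
by move=> k; rewrite mem_iota => /andP [hk _]; rewrite inSupp_big.
Qed.

Lemma ct_ge u : size (suppl u) <= SC (ct u).
Proof.
rewrite SC_ct (supp_count _ _ (leqnn _)); apply: sub_count => k; exact: cf_change.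
Qed.

Lemma ct_gt u a b : 0 < a -> is_run u a b -> odd (b.+1 - a) -> size (suppl u) < SC (ct u).
Proof.
move=> a0 hr hodd.
have hra := hr; case/and4P: hra => ab /allP hall ha hb.
have Sa : inSupp u a by apply: hall; rewrite mem_iota; lia.
have aN : a < size u by rewrite ltnNge; apply/negP => /inSupp_big; rewrite Sa.
have Na : ~~ inSupp u a.-1 by move: ha; case: eqP => //; lia.
rewrite SC_ct (supp_count _ _ (leqnn _)).
have -> : size u = a.-1 + (size u - a).+1 by lia.
rewrite iotaD !count_cat /= add0n.
have -> : a.-1.+1 = a by lia.
rewrite (negbTE Na) add0n.
have -> : opp (cf u a.-1) (cf u a) by rewrite /cf (negbTE Na) Sa (run_ee _ _ _ hr) hodd.
rewrite add1n addnS ltnS leq_add //; apply: sub_count => k; exact: cf_change.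
Qed.

Lemma subseq_nth_geq (y x : seq nat) : sorted geq y -> subseq x y ->
  forall i, i < size x -> nth 0 x i <= nth 0 y i.
Proof.
elim: y x => [|h y IH] x.
  by move=> _ /eqP -> .
move=> hs; have hy : sorted geq y by exact: path_sorted hs.
case: x => [|x0 x] // hsub i hi.
have hsz := size_subseq hsub.
move: hsub => /=; case: eqP => [-> hsub|_ hsub].
  by case: i hi => [|i] //= hi; apply: IH.
have := IH _ hy hsub i hi; move=> H1; apply: (leq_trans H1).
case: i hi H1 => [|i] hi H1 /=.
  by case: y {IH hy hsub hsz H1} hs => [|y0 y] //= /andP [].
have hi' : i.+1 < size y by move: (size_subseq hsub) hi => /= ; lia.
have gtr : transitive geq by move=> a b c h1 h2; exact: leq_trans h2 h1.
have := sorted_leq_nth gtr (@leqnn) 0 hy.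
move=> /(_ i i.+1); rewrite !inE; apply => //; lia.
Qed.

Lemma suppl_N u N : size u <= N -> suppl u = filter (inSupp u) (iota 0 N).
Proof.
move=> h; rewrite /suppl -(subnKC h) iotaD filter_cat add0n.
rewrite [filter _ (iota (size u) _)](_ : _ = [::]) ?cats0 //.
apply/eqP; rewrite -[_ == _]negbK -has_filter; apply/hasPn => k.
by rewrite mem_iota => /andP [hk _]; rewrite inSupp_big.
Qed.

Lemma preceq0_sub A B : (forall i, inSupp A i -> inSupp B i) -> preceq0 A B.
Proof.
move=> hAB.
set N := maxn (size A) (size B).
have hsub : subseq (suppl A) (suppl B).
  rewrite (suppl_N A N) ?leq_maxl // (suppl_N B N) ?leq_maxr //.
  have -> : filter (inSupp A) (iota 0 N) = filter (inSupp A) (filter (inSupp B) (iota 0 N)).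
    rewrite -filter_predI; apply: eq_filter => k /=.
    by case h: (inSupp A k) => //=; rewrite hAB.
  exact: filter_subseq.
have hsub' : subseq (rev (suppl A)) (rev (suppl B)) by rewrite subseq_rev.
have hsort : sorted geq (rev (suppl B)).
  rewrite rev_sorted /suppl.
  apply: (sorted_filter (leT := leq)); first exact: leq_trans.
  exact: iota_sorted.
rewrite /preceq0 (size_subseq hsub') /=.
apply/allP => i; rewrite mem_iota add0n => /andP [_ hi].
exact: subseq_nth_geq hsort hsub' i hi.
Qed.

Lemma entry_mkseq (f : nat -> sign) n i : entry (mkseq f n) i = if i < n then f i else Zer.
Proof.
rewrite /entry; case: ltnP => h; first by rewrite nth_mkseq.
by rewrite nth_default // size_mkseq.
Qed.

Theorem mainTheorem13 (s : seq sign) (d : nat) (sp : seq sign) :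
  SplusCirc s ->
  entry s d = Zer -> (forall i, i < d -> entry s i != Zer) ->
  Splus sp -> (forall i, inSupp sp i = inSupp s i || (i == d)) ->
  SplusCirc sp /\ prec s sp /\ (forall n, IsDd s n -> IsDd sp n.+1).
Proof.
move=> [Hs [[t0 [adm0 eq0]] ub]] sd Hd Hsp Hsupp.
set S := size (suppl s).
have dsp : inSupp sp d by rewrite Hsupp eqxx orbT.
have dns : inSupp s d = false by rewrite /inSupp sd.
have hcount : size (suppl sp) = S.+1.
  set N := maxn (size s) (size sp).
  rewrite /S (supp_count s N) ?leq_maxl // (supp_count sp N) ?leq_maxr //.
  rewrite (eq_count (a2 := predU (inSupp s) (pred1 d))); last by move=> k; rewrite Hsupp.
  apply/eqP; rewrite -(eqn_add2r (count (predI (inSupp s) (pred1 d)) (iota 0 N))).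
  rewrite count_predUI.
  rewrite (eq_count (a1 := predI _ _) (a2 := pred0)); last first.
    by move=> k /=; case: eqP => [->|_]; rewrite ?dns ?andbF.
  rewrite count_pred0 addn0 -addn1 eqn_add2l.
  rewrite count_uniq_mem ?iota_uniq // mem_iota add0n /=.
  have : d < size sp by rewrite ltnNge; apply/negP => /inSupp_big; rewrite dsp.
  by move=> h; rewrite (leq_trans h) // leq_maxr.
have ub2 : forall t, admissible sp t -> SC t <= S.+1.
  move=> t ht; rewrite SC_chgl.
  apply: (leq_trans (chgl_behead t)).
  rewrite -(nz_shiftd t d) -SC_chgl addn1 ltnS.
  apply: ub; exact: adm_shiftd Hs Hsp Hd Hsupp ht.
have Dsp : IsDd sp S.+1.
  split => //; exists (ct sp); split; first exact: ct_adm.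
  apply/eqP; rewrite eqn_leq ub2; last exact: ct_adm.
  by rewrite -hcount ct_ge.
have noodd : forall i, ceil_add s i = false.
  move=> i; apply/negP; case/andP => i0 /hasP [a _] /andP [/andP [a0 hr] hodd].
  have hodd' : odd (i.-1.+1 - a) by rewrite prednK.
  have := ct_gt s a i.-1 a0 hr hodd'.
  by rewrite ltnNge ub //; apply: ct_adm.
split; first by split => //; rewrite hcount.
split.
  have neq : ~ seq_eq s sp.
    by move=> /(_ d); rewrite sd => h; move: dsp; rewrite /inSupp -h.
  split => //; right; split => //.
  apply: preceq0_sub => i.
  rewrite /inSupp /sceil /sfloor !entry_mkseq.
  case: ltnP => // _; rewrite noodd orbF.
  case h: (inSupp s i) => // _.
  have hsp : inSupp sp i by rewrite Hsupp h.
  have : i < size sp by rewrite ltnNge; apply/negP => /inSupp_big; rewrite hsp.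
  move=> isp; case: ltnP => [_|]; first by rewrite hsp.
  by rewrite leqNgt isp.
move=> n [[t [ht et]] ubn].
have : n = S.
  apply/eqP; rewrite eqn_leq -{1}et ub //= /S -eq0 ubn //.
by move=> ->.
Qed.
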